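(* There exists a one-input one-output AND-OR net that does not belong to $\mathbf S(\mathbf{11tAND}\cup\mathbf{11pOR})$.
   Context: Petri nets: $(P,T,F)$ with finite disjoint places $P$, transitions $T$, flow edges $F\subseteq(P\times T)\cup(T\times P)$; $\bullet x=\{y\mid(y,x)\in F\}$, $x\bullet=\{y\mid(x,y)\in F\}$. Workflow nets. A pWF net is $(P,T,F,I,O)$ with $(P,T,F)$ a Petri net, $I,O\subseteq P$ non-empty, every node reachable by a directed path from some node of $I$, and some node of $O$ reachable from every node. A tWF net is the same with $I,O$ non-empty subsets of $T$. Input nodes may have incoming edges and output nodes outgoing edges. A WF net is a pWF or tWF net; it is one-input (one-output) if $|I|=1$ ($|O|=1$). Substitution. Let $N=(P,T,F,I,O)$ and $M=(P',T',F',I',O')$ be WF nets with disjoint node sets. If $p\in P$ and $M$ is a pWF net, $N\otimes_p M$ is obtained from $N$ by deleting $p$ and all edges incident to $p$, adding all nodes and edges of $M$, adding an edge $(t,p')$ for each $t\in\bullet_N p$ and each $p'\in I'$, and an edge $(p',t)$ for each $p'\in O'$ and each $t\in p\bullet_N$; its input set is $(I\setminus\{p\})\cup I'$ if $p\in I$ and $I$ otherwise, and its output set is $(O\setminus\{p\})\cup O'$ if $p\in O$ and $O$ otherwise. If $t\in T$ and $M$ is a tWF net, $N\otimes_t M$ is defined analogously: delete $t$ and its edges, add $M$, add $(q,t')$ for each $q\in\bullet_N t$, $t'\in I'$, and $(t',q)$ for each $t'\in O'$, $q\in t\bullet_N$, with input/output sets updated in the same way. The substitution closure $\mathbf S(C)$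 of a class $C$ of WF nets is the smallest superclass of $C$ such that whenever $N,M\in\mathbf S(C)$ are disjoint, $N\otimes_p M\in\mathbf S(C)$ for every place $p$ of $N$ if $M$ is a pWF net, and $N\otimes_t M\in\mathbf S(C)$ for every transition $t$ of $N$ if $M$ is a tWF net. AND and OR nets. An AND net is an acyclic WF net $(P,T,F,I,O)$ such that for every place $p$: (1) either $p\in I$ and $|\bullet p|=0$, or $p\notin I$ and $|\bullet p|=1$; and (2) either $p\in O$ and $|p\bullet|=0$, or $p\notin O$ and $|p\bullet|=1$. An OR net is a (possibly cyclic) WF net such that for every transition $t$: (1) either $t\in I$ and $|\bullet t|=0$, or $t\notin I$ and $|\bullet t|=1$; and (2) either $t\in O$ and $|t\bullet|=0$, or $t\notin O$ and $|t\bullet|=1$. A pAND (tAND, pOR, tOR) net is an AND (AND, OR, OR) net that is a pWF (tWF, pWF, tWF) net. $\mathbf{pAND}$ is the class of pAND nets, $\mathbf{11tAND}$ the class of one-input one-output tAND nets, $\mathbf{11pOR}$ the class of one-input one-output pOR nets, and $\mathbf{tOR}$ the class of tOR nets. The class of AND-OR nets is $\mathbf S(\mathbf{pAND}\cup\mathbf{11tAND}\cup\mathbf{11pOR}\cup\mathbf{tOR})$. *)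

(* Defs.v *)
From mathcomp Require Import all_boot.
From Stdlib Require Import Relations.Relation_Operators.
Set Implicit Arguments. Unset Strict Implicit. Unset Printing Implicit Defensive.

Record Net := mkNet {
  pl  : pred nat;
  tr  : pred nat;
  fl  : rel nat;
  inp : pred nat;
  out : pred nat }.

Definition node (N : Net) (x : nat) : bool := pl N x || tr N x.

Definition petri_net (N : Net) : Prop :=
  (exists n, forall x, node N x -> x < n) /\
  (forall x, ~~ (pl N x && tr N x)) /\
  (forall x y, fl N x y -> (pl N x && tr N y) || (tr N x && pl N y)).

Definition reach (N : Net) : nat -> nat -> Prop :=
  clos_refl_trans nat (fun x y => fl N x y).

Definition wf_common (N : Net) : Prop :=
  petri_net N /\
  (exists i, inp N i) /\ (exists o, out N o) /\
  (forall x, node N x -> exists i, inp N i /\ reach N i x) /\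
  (forall x, node N x -> exists o, out N o /\ reach N x o).

Definition pWF (N : Net) : Prop :=
  wf_common N /\ (forall x, inp N x -> pl N x) /\ (forall x, out N x -> pl N x).

Definition tWF (N : Net) : Prop :=
  wf_common N /\ (forall x, inp N x -> tr N x) /\ (forall x, out N x -> tr N x).

Definition WF (N : Net) : Prop := pWF N \/ tWF N.

Definition one_input (N : Net) : Prop := exists! i, inp N i.
Definition one_output (N : Net) : Prop := exists! o, out N o.

(* Substitution N ⊗_x M of the node x of N by M (uniform for places and
   transitions; the type constraints are imposed in the closure). *)
Definition subst (N : Net) (x : nat) (M : Net) : Net :=
  mkNet
    (fun y => (pl N y && (y != x)) || pl M y)
    (fun y => (tr N y && (y != x)) || tr M y)
    (fun u v => [&& fl N u v, u != x & v != x] || fl M u v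
                || (fl N u x && inp M v) || (out M u && fl N x v))
    (if inp N x then (fun y => (inp N y && (y != x)) || inp M y) else inp N)
    (if out N x then (fun y => (out N y && (y != x)) || out M y) else out N).

Definition disjoint_nets (N M : Net) : Prop :=
  forall y, node N y -> ~~ node M y.

Inductive S (C : Net -> Prop) : Net -> Prop :=
| S_base N : C N -> S C N
| S_place N M p : S C N -> S C M -> disjoint_nets N M -> pl N p -> pWF M ->
    S C (subst N p M)
| S_trans N M t : S C N -> S C M -> disjoint_nets N M -> tr N t -> tWF M ->
    S C (subst N t M).

Definition acyclic (N : Net) : Prop :=
  forall x, ~ clos_trans nat (fun u v => fl N u v) x x.

Definition no_pre (N : Net) x : Prop := forall y, ~ fl N y x.
Definition one_pre (N : Net) x : Prop := exists! y, fl N y x.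
Definition no_post (N : Net) x : Prop := forall y, ~ fl N x y.
Definition one_post (N : Net) x : Prop := exists! y, fl N x y.

Definition AND_net (N : Net) : Prop :=
  WF N /\ acyclic N /\
  forall p, pl N p ->
    ((inp N p /\ no_pre N p) \/ (~ inp N p /\ one_pre N p)) /\
    ((out N p /\ no_post N p) \/ (~ out N p /\ one_post N p)).

Definition OR_net (N : Net) : Prop :=
  WF N /\
  forall t, tr N t ->
    ((inp N t /\ no_pre N t) \/ (~ inp N t /\ one_pre N t)) /\
    ((out N t /\ no_post N t) \/ (~ out N t /\ one_post N t)).

Definition pAND (N : Net) : Prop := AND_net N /\ pWF N.
Definition tAND11 (N : Net) : Prop :=
  AND_net N /\ tWF N /\ one_input N /\ one_output N.
Definition pOR11 (N : Net) : Prop :=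
  OR_net N /\ pWF N /\ one_input N /\ one_output N.
Definition tOR (N : Net) : Prop := OR_net N /\ tWF N.

Definition AND_OR_net (N : Net) : Prop :=
  S (fun M => pAND M \/ tAND11 M \/ pOR11 M \/ tOR M) N.

(* Main.v *)
Require Import Defs.
From mathcomp Require Import all_boot.
From Stdlib Require Import Relations.Relation_Operators.
Set Implicit Arguments. Unset Strict Implicit. Unset Printing Implicit Defensive.

Definition noshare (N : Net) : Prop :=
  forall u1 u2 a b, u1 <> u2 -> a <> b -> fl N u1 a -> fl N u1 b ->
    fl N u2 a -> fl N u2 b -> False.

Definition Inv (N : Net) : Prop :=
  petri_net N /\ one_input N /\ one_output N /\ noshare N.

Lemma edge_nodes N u v : petri_net N -> fl N u v -> node N u /\ node N v /\ u <> v.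
Proof.
case=> _ [Hd He] /He /orP[/andP[a b]|/andP[a b]]; rewrite /node ?a ?b ?orbT;
  (split=>//; split=>// E; subst; by have:= Hd v; rewrite a b).
Qed.

Lemma triangle N u x a : petri_net N -> fl N u x -> fl N x a -> fl N u a -> False.
Proof.
case=> _ [Hd He] h1 h2 h3.
move: (He _ _ h1) (He _ _ h2) (He _ _ h3) (Hd u) (Hd x) (Hd a).
by case: (pl N u) (tr N u) (pl N x) (tr N x) (pl N a) (tr N a) => [] [] [] [] [] [].
Qed.

Lemma uniq_pre N x y1 y2 : one_pre N x -> fl N y1 x -> fl N y2 x -> y1 = y2.
Proof. by case=> y [_ H] h1 h2; rewrite -(H _ h1) (H _ h2). Qed.
Lemma uniq_post N x y1 y2 : one_post N x -> fl N x y1 -> fl N x y2 -> y1 = y2.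
Proof. by case=> y [_ H] h1 h2; rewrite -(H _ h1) (H _ h2). Qed.

Lemma and_noshare N : petri_net N -> (forall p, pl N p ->
    ((inp N p /\ no_pre N p) \/ (~ inp N p /\ one_pre N p)) /\
    ((out N p /\ no_post N p) \/ (~ out N p /\ one_post N p))) -> noshare N.
Proof.
move=> HP H u1 u2 a b nu na h1a h1b h2a h2b.
case: HP => _ [_ He].
case/orP: (He _ _ h1a) => /andP[pu ta].
- case: (H _ pu) => _ [[_ np]|[_ op]]; first by apply: (np a).
  by apply: na; apply: uniq_post op h1a h1b.
- case: (H _ ta) => [[[_ np]|[_ op]] _]; first by apply: (np u1).
  by apply: nu; apply: uniq_pre op h1a h2a.
Qed.

Lemma or_noshare N : petri_net N -> (forall p, tr N p ->
    ((inp N p /\ no_pre N p) \/ (~ inp N p /\ one_pre N p)) /\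
    ((out N p /\ no_post N p) \/ (~ out N p /\ one_post N p))) -> noshare N.
Proof.
move=> HP H u1 u2 a b nu na h1a h1b h2a h2b.
case: HP => _ [_ He].
case/orP: (He _ _ h1a) => /andP[pu ta].
- case: (H _ ta) => [[[_ np]|[_ op]] _]; first by apply: (np u1).
  by apply: nu; apply: uniq_pre op h1a h2a.
- case: (H _ pu) => _ [[_ np]|[_ op]]; first by apply: (np a).
  by apply: na; apply: uniq_post op h1a h1b.
Qed.

Definition C := fun M => tAND11 M \/ pOR11 M.

Lemma base_inv N : C N -> Inv N.
Proof.
case=> [[[HW [_ H]] [_ [H1 H2]]]|[[HW H] [_ [H1 H2]]]].
- have HP : petri_net N by case: HW => [[[]]|[[]]].
  by split=>//; split=>//; split=>//; apply: and_noshare.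
- have HP : petri_net N by case: HW => [[[]]|[[]]].
  by split=>//; split=>//; split=>//; apply: or_noshare.
Qed.

Lemma subst_petri N M x : petri_net N -> petri_net M -> disjoint_nets N M ->
  (forall y, inp M y -> (pl N x -> pl M y) /\ (tr N x -> tr M y)) ->
  (forall y, out M y -> (pl N x -> pl M y) /\ (tr N x -> tr M y)) ->
  petri_net (subst N x M).
Proof.
move=> [[n Hn] [Hd He]] [[m Hm] [HdM HeM]] Hdj Hi Ho.
split; [|split].
- exists (maxn n m) => y; rewrite /node /=. idtac.
  case/orP => [/orP[/andP[h _]|h]|/orP[/andP[h _]|h]].
  + by apply: (leq_trans (Hn y _)); rewrite ?leq_maxl // /node h.
  + by apply: (leq_trans (Hm y _)); rewrite ?leq_maxr // /node h.
  + by apply: (leq_trans (Hn y _)); rewrite ?leq_maxl // /node h orbT.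
  + by apply: (leq_trans (Hm y _)); rewrite ?leq_maxr // /node h orbT.
- move=> y /=; apply/negP; case/andP => /orP[/andP[p _]|p] /orP[/andP[t _]|t].
  + by move: (Hd y); rewrite p t.
  + by move: (Hdj y); rewrite /node p t !orbT => /(_ isT).
  + by move: (Hdj y); rewrite /node p t !orbT => /(_ isT).
  + by move: (HdM y); rewrite p t.
- move=> u v /=; case/orP => [/orP[/orP[H|H]|H]|H].
  + case/and3P: H => h ux vx; rewrite ux vx.
    by case/orP: (He _ _ h) => /andP[-> ->]; rewrite /= ?orbT.
  + by case/orP: (HeM _ _ H) => /andP[-> ->]; rewrite !orbT.
  + case/andP: H => h iv; case/orP: (He _ _ h) => /andP[a b].
    * have ux : u != x by apply/eqP => E; subst; move: (Hd x); rewrite a b.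
      by rewrite a ux (proj2 (Hi _ iv) b) orbT.
    * have ux : u != x by apply/eqP => E; subst; move: (Hd x); rewrite a b.
      by rewrite a ux (proj1 (Hi _ iv) b) !orbT.
  + case/andP: H => ou h; case/orP: (He _ _ h) => /andP[a b].
    * have vx : v != x by apply/eqP => E; subst; move: (Hd x); rewrite a b.
      by rewrite b vx (proj1 (Ho _ ou) a) orbT.
    * have vx : v != x by apply/eqP => E; subst; move: (Hd x); rewrite a b.
      by rewrite b vx (proj2 (Ho _ ou) a) !orbT.
Qed.

Lemma classify N M x i o u v : petri_net N -> petri_net M ->
  (forall y, inp M y -> y = i) -> (forall y, out M y -> y = o) ->
  fl (subst N x M) u v ->
 [\/ [/\ node N u, u <> x, node N v, v <> x & fl N u v],
     [/\ node N u, u <> x, v = i & fl N u x],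
     [/\ node M u, node M v & fl M u v] |
     [/\ u = o, node N v, v <> x & fl N x v]].
Proof.
move=> HP HPM Hi Ho /=; case/orP => [/orP[/orP[H|H]|H]|H].
- case/and3P: H => h /eqP ux /eqP vx; case: (edge_nodes HP h) => a [b _].
  by apply: Or41.
- by case: (edge_nodes HPM H) => a [b _]; apply: Or43.
- case/andP: H => h iv; case: (edge_nodes HP h) => a [_ c].
  by apply: Or42; split => //; apply: Hi.
- case/andP: H => ou h; case: (edge_nodes HP h) => _ [b c].
  by apply: Or44; split => //; [apply: Ho | move=> E; apply: c].
Qed.

Ltac closer HP HnsN HnsM Hdj :=
  first
  [ match goal with
    | H1 : is_true (node _ ?y), H2 : is_true (node _ ?y) |- _ =>
        by move: (Hdj y H1); rewrite H2 end
  | congruence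
  | match goal with
    | H1 : is_true (fl _ ?u1 ?a), H2 : is_true (fl _ ?u1 ?b),
      H3 : is_true (fl _ ?u2 ?a), H4 : is_true (fl _ ?u2 ?b) |- _ =>
        solve [apply: (HnsN u1 u2 a b) => //; congruence
              |apply: (HnsM u1 u2 a b) => //; congruence] end
  | match goal with
    | H1 : is_true (fl _ ?u ?x), H2 : is_true (fl _ ?x ?a),
      H3 : is_true (fl _ ?u ?a) |- _ => by apply: (triangle HP H1 H2 H3) end ].

Lemma subst_noshare N M x i o : petri_net N -> petri_net M -> disjoint_nets N M ->
  (forall y, inp M y -> y = i) -> (forall y, out M y -> y = o) ->
  node M i -> node M o -> noshare N -> noshare M -> noshare (subst N x M).
Proof.
move=> HP HPM Hdj Hi Ho ni no HnsN HnsM u1 u2 a b nu nab h1a h1b h2a h2b.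
case: (classify HP HPM Hi Ho h1a) => [[? ? ? ? ?]|[? ? ? ?]|[? ? ?]|[? ? ? ?]];
case: (classify HP HPM Hi Ho h1b) => [[? ? ? ? ?]|[? ? ? ?]|[? ? ?]|[? ? ? ?]];
case: (classify HP HPM Hi Ho h2a) => [[? ? ? ? ?]|[? ? ? ?]|[? ? ?]|[? ? ? ?]];
case: (classify HP HPM Hi Ho h2b) => [[? ? ? ? ?]|[? ? ? ?]|[? ? ?]|[? ? ? ?]];
subst; closer HP HnsN HnsM Hdj.
Qed.

Lemma subst_inv N M x : Inv N -> Inv M -> disjoint_nets N M -> node N x ->
  (forall y, inp M y -> (pl N x -> pl M y) /\ (tr N x -> tr M y)) ->
  (forall y, out M y -> (pl N x -> pl M y) /\ (tr N x -> tr M y)) ->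
  Inv (subst N x M).
Proof.
move=> [HP [[iN [iNi HiN]] [[oN [oNo HoN]] HnsN]]]
       [HPM [[i [ii Hi]] [[o [oo Ho]] HnsM]]] Hdj nx HI HO.
have Hi' : forall y, inp M y -> y = i by move=> y /Hi ->.
have Ho' : forall y, out M y -> y = o by move=> y /Ho ->.
have nd : forall y, (pl N x -> pl M y) /\ (tr N x -> tr M y) -> node M y.
  move=> y [h1 h2]; case/orP: nx => h; rewrite /node ?(h1 h) ?(h2 h) //.
  by rewrite orbT.
split; first exact: subst_petri.
split; [|split].
- rewrite /one_input /=; case E: (inp N x).
  + exists i; split; first by rewrite ii orbT.
    move=> y /orP[/andP[h /eqP ne]|h]; last by apply: Hi.
    by exfalso; apply: ne; rewrite -(HiN _ h) (HiN _ E).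
  + by exists iN.
- rewrite /one_output /=; case E: (out N x).
  + exists o; split; first by rewrite oo orbT.
    move=> y /orP[/andP[h /eqP ne]|h]; last by apply: Ho.
    by exfalso; apply: ne; rewrite -(HoN _ h) (HoN _ E).
  + by exists oN.
- by apply: (subst_noshare (i:=i) (o:=o)) => //; apply: nd; [apply: HI|apply: HO].
Qed.

Lemma S_inv N : S C N -> Inv N.
Proof.
elim=> {N} [N /base_inv //|N M p _ IN _ IM Hdj pp [_ [HI HO]]|N M t _ IN _ IM Hdj tt [_ [HI HO]]].
- apply: subst_inv => //; first by rewrite /node pp.
  + by move=> y /HI h; split => // tp; move: IN => [[_ [Hd _]] _]; move: (Hd p); rewrite pp tp.
  + by move=> y /HO h; split => // tp; move: IN => [[_ [Hd _]] _]; move: (Hd p); rewrite pp tp.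
- apply: subst_inv => //; first by rewrite /node tt orbT.
  + by move=> y /HI h; split => // tp; move: IN => [[_ [Hd _]] _]; move: (Hd t); rewrite tt tp.
  + by move=> y /HO h; split => // tp; move: IN => [[_ [Hd _]] _]; move: (Hd t); rewrite tt tp.
Qed.

Ltac bdes := repeat match goal with
 | H : is_true (_ || _) |- _ => case/orP: H => H
 | H : is_true (_ && _) |- _ => let H1 := fresh "H" in case/andP: H => H H1
 | H : is_true (_ == _) |- _ => move/eqP: H => H; first [discriminate H | subst]
 | H : is_true false |- _ => discriminate H
 | H : is_true ?t |- _ => progress (simpl in H)
 end.

Definition N0 : Net := mkNet (fun y => (y == 0) || (y == 3)) (fun y => (y == 1) || (y == 2))
  (fun u v => [|| (u == 0) && (v == 1), (u == 0) && (v == 2), (u == 1) && (v == 3)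
              | (u == 2) && (v == 3)])
  (fun y => y == 0) (fun y => y == 3).

Definition M0 : Net := mkNet (fun y => [|| y == 4, y == 5 | y == 7]) (fun y => y == 6)
  (fun u v => [|| (u == 4) && (v == 6), (u == 5) && (v == 6) | (u == 6) && (v == 7)])
  (fun y => (y == 4) || (y == 5)) (fun y => y == 7).

Lemma st (N : Net) u v : fl N u v -> reach N u v.
Proof. by move=> h; apply: rt_step. Qed.
Lemma tr3 (N : Net) u v w : reach N u v -> reach N v w -> reach N u w.
Proof. by move=> h1 h2; apply: rt_trans h1 h2. Qed.

Lemma acyc_rank (N : Net) : (forall u v, fl N u v -> u < v) -> acyclic N.
Proof.
move=> H x h.
have K : forall a b, clos_trans nat (fun u v => fl N u v) a b -> a < b.
  move=> a b; elim => [u v /H //|u v w _ h1 _ h2]; exact: ltn_trans h1 h2.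
by move: (K _ _ h); rewrite ltnn.
Qed.

Lemma pwf_N0 : pWF N0.
Proof.
split; last by split => y /= h; bdes.
split; [|split; [by exists 0|split; [by exists 3|split]]].
- split; [exists 10 => y; rewrite /node /= => h; bdes; done|].
  by split => [y|u v /= h]; [apply/negP => /= h|]; bdes.
- move=> y; rewrite /node /= => h; exists 0; split => //; bdes.
  + exact: rt_refl.
  + by apply: (tr3 (v:=1)); apply: st.
  + by apply: st.
  + by apply: st.
- move=> y; rewrite /node /= => h; exists 3; split => //; bdes.
  + by apply: (tr3 (v:=1)); apply: st.
  + exact: rt_refl.
  + by apply: st.
  + by apply: st.
Qed.

Lemma pOR11_N0 : pOR11 N0.
Proof.
split; [split; [by left; apply: pwf_N0|]|split; [exact: pwf_N0|]].
- move=> t /= h; bdes.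
  + split; (right; split; [by []|]).
    * by exists 0; split => // y h; bdes.
    * by exists 3; split => // y h; bdes.
  + split; (right; split; [by []|]).
    * by exists 0; split => // y h; bdes.
    * by exists 3; split => // y h; bdes.
- by split; [exists 0|exists 3]; split => // y h; bdes.
Qed.

Lemma pwf_M0 : pWF M0.
Proof.
split; last by split => y /= h; bdes.
split; [|split; [by exists 4|split; [by exists 7|split]]].
- split; [exists 10 => y; rewrite /node /= => h; bdes; done|].
  by split => [y|u v /= h]; [apply/negP => /= h|]; bdes.
- move=> y; rewrite /node /= => h; bdes.
  + by exists 4; split => //; exact: rt_refl.
  + by exists 5; split => //; exact: rt_refl.
  + by exists 4; split => //; apply: (tr3 (v:=6)); apply: st.
  + by exists 4; split => //; apply: st.
- move=> y; rewrite /node /= => h; exists 7; split => //; bdes.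
  + by apply: (tr3 (v:=6)); apply: st.
  + by apply: (tr3 (v:=6)); apply: st.
  + exact: rt_refl.
  + by apply: st.
Qed.

Lemma pAND_M0 : pAND M0.
Proof.
split; last exact: pwf_M0.
split; [by left; apply: pwf_M0|split].
- by apply: acyc_rank => u v /= h; bdes.
- move=> p /= h; bdes.
  + split; [left; split=> // y /= h; bdes|right; split; first by move=> h; bdes].
    by exists 6; split => // y h; bdes.
  + split; [left; split=> // y /= h; bdes|right; split; first by move=> h; bdes].
    by exists 6; split => // y h; bdes.
  + split; [right; split; first by move=> h; bdes|left; split=> // y /= h; bdes].
    by exists 6; split => // y h; bdes.
Qed.

Theorem mainTheorem4 :
  exists N : Net,
    AND_OR_net N /\ one_input N /\ one_output N /\
    ~ S (fun M => tAND11 M \/ pOR11 M) N.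
Proof.
exists (subst N0 3 M0); split; [|split; [|split]].
- apply: S_place => //; [apply: S_base; right; right; left; exact: pOR11_N0
                        |apply: S_base; left; exact: pAND_M0| |exact: pwf_M0].
  by move=> y; rewrite /node /= => h; bdes.
- by exists 0; split => // y /= h; bdes.
- by exists 7; split => // y /= h; bdes.
- move=> /S_inv [_ [_ [_ H]]].
  by apply: (H 1 2 4 5).
Qed.
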